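(* Assume $t_m=1$. If $w$ is a trident of $u_\beta$ with rooted tooth $X=1$ and $Y\ne0$ is a non-rooted tooth of $w$, then $t_Y=t_1$.
   Context: $\beta>1$ is a simple Parry number with $d_\beta(1)=t_1\cdots t_{m-1}t_m$, $m\ge2$, nonnegative integer digits, $t_1\ge1$, satisfying the Parry condition ($t_i\cdots t_m0^\omega$ lexicographically strictly smaller than $t_1\cdots t_m0^\omega$ for $2\le i\le m$). $\varphi$ is the substitution on $\mathcal A=\{0,\dots,m-1\}$ with $\varphi(k)=0^{t_{k+1}}(k+1)$ for $0\le k\le m-2$, $\varphi(m-1)=0^{t_m}$, and $u_\beta=\lim_n\varphi^n(0)$ is its fixed point. A factor $w$ is left special if at least two distinct letters $a$ make $aw$ a factor of $u_\beta$. A factor $w$ is a trident if there exist letters $X,Y,Z\in\mathcal A$ such that: $wX$ is a left special factor; $wY$ and $wZ$ are factors that are not left special; and the unique left extensions of $wY$ and $wZ$ are distinct. $X$ is the rooted tooth and $Y,Z$ the non-rooted teeth. *)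

(* Defs.v *)
From mathcomp Require Import all_boot.
Set Implicit Arguments.
Unset Strict Implicit.
Unset Printing Implicit Defensive.

(* The digit string d_beta(1) = t_1 ... t_m is represented by t : seq nat,
   with t_i = nth 0 t (i-1) and m = size t.  Letters of the alphabet
   A = {0,...,m-1} are natural numbers. *)

Definition tdig (t : seq nat) (i : nat) : nat := nth 0 t i.-1.

Definition lex_lt (a b : nat -> nat) : Prop :=
  exists n, (forall k, k < n -> a k = b k) /\ a n < b n.

Definition parry_cond (t : seq nat) : Prop :=
  forall i, 2 <= i <= size t ->
    lex_lt (fun k => nth 0 t (i.-1 + k)) (fun k => nth 0 t k).

Definition phi (t : seq nat) (k : nat) : seq nat :=
  if k.+1 < size t then nseq (tdig t k.+1) 0 ++ [:: k.+1]
  else nseq (tdig t (size t)) 0.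

Definition phiw (t : seq nat) (s : seq nat) : seq nat :=
  flatten (map (phi t) s).

(* u_beta = lim phi^n(0): its k-th letter is the k-th letter of
   phi^{k+1}(0) (which has length > k and is a prefix of the limit). *)
Definition ubeta (t : seq nat) (k : nat) : nat :=
  nth 0 (iter k.+1 (phiw t) [:: 0]) k.

Definition factor (t : seq nat) (w : seq nat) : Prop :=
  exists i, w = [seq ubeta t (i + j) | j <- iota 0 (size w)].

Definition left_special (t : seq nat) (w : seq nat) : Prop :=
  exists a b, a <> b /\ factor t (a :: w) /\ factor t (b :: w).

Definition trident_with (t : seq nat) (w : seq nat) (X Y Z : nat) : Prop :=
  [/\ X < size t, Y < size t & Z < size t] /\
  left_special t (rcons w X) /\
  (factor t (rcons w Y) /\ ~ left_special t (rcons w Y)) /\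
  (factor t (rcons w Z) /\ ~ left_special t (rcons w Z)) /\
  (exists a b, [/\ a <> b, factor t (a :: rcons w Y)
                          & factor t (b :: rcons w Z)]).

(* Main.v *)
Require Import Defs.
From mathcomp Require Import all_boot zify.

Set Implicit Arguments.
Unset Strict Implicit.
Section S.
Variable t : seq nat.
Hypothesis Hm : 2 <= size t.
Hypothesis Ht1 : 1 <= tdig t 1.
Hypothesis Htm : tdig t (size t) = 1.

Definition W n := iter n (phiw t) [:: 0].
Notation u := (ubeta t).

Lemma phiw_cat s1 s2 : phiw t (s1 ++ s2) = phiw t s1 ++ phiw t s2.
Proof. by rewrite /phiw map_cat flatten_cat. Qed.

Lemma phiw_cons x s : phiw t (x :: s) = phi t x ++ phiw t s.
Proof. by []. Qed.

Lemma size_phi k : 0 < size (phi t k).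
Proof. rewrite /phi; case: ifP => _; first by rewrite size_cat /= addn1.
by rewrite size_nseq Htm. Qed.

Lemma phi0 : phi t 0 = 0 :: (nseq (tdig t 1).-1 0 ++ [:: 1]).
Proof. rewrite /phi Hm. by case: (tdig t 1) Ht1. Qed.

Lemma size_phiw s : size s <= size (phiw t s).
Proof. elim: s => //= x s IH. rewrite phiw_cons size_cat.
have := size_phi x. lia. Qed.

Lemma W_cons n : exists s, W n = 0 :: s.
Proof. elim: n => [|n [s IH]]; first by exists [::].
rewrite /W iterS -/(W n) IH phiw_cons phi0. by eexists. Qed.

Lemma W_size n : n < size (W n).
Proof. elim: n => // n IH. rewrite /W iterS -/(W n).
case: (W_cons n) => s E. move: IH; rewrite E phiw_cons phi0 /=.
have := size_phiw s. rewrite !size_cat /=. lia. Qed.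

Lemma W_prefix n : exists s, W n.+1 = W n ++ s.
Proof. elim: n => [|n [s IH]].
  rewrite /W /= /phiw /= cats0 phi0. by eexists.
exists (phiw t s). have -> : W n.+2 = phiw t (W n.+1) by [].
by rewrite {1}IH phiw_cat. Qed.

Lemma W_nth n k : forall j, k < size (W n) -> nth 0 (W (n + j)) k = nth 0 (W n) k.
Proof. elim => [|j IH] H; first by rewrite addn0.
rewrite addnS. case: (W_prefix (n + j)) => s ->. rewrite nth_cat.
have Hs : k < size (W (n + j)).
  elim: j {IH} => [|j IHj]; first by rewrite addn0.
  rewrite addnS. case: (W_prefix (n + j)) => s' ->. rewrite size_cat. lia.
by rewrite Hs IH. Qed.

Lemma ubeta_W n k : k < size (W n) -> u k = nth 0 (W n) k.
Proof. move=> H. rewrite /ubeta -/(W k.+1).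
have Hk := W_size k.+1.
case: (leqP n k.+1) => Hn.
  have -> : k.+1 = n + (k.+1 - n) by lia. by rewrite W_nth.
have -> : n = k.+1 + (n - k.+1) by lia. by rewrite W_nth // ltnW.
Qed.

Definition P q := size (phiw t (mkseq u q)).

Lemma P0 : P 0 = 0. Proof. by []. Qed.
Lemma PS q : P q.+1 = P q + size (phi t (u q)).
Proof. by rewrite /P mkseqS -cats1 phiw_cat size_cat /phiw /= cats0. Qed.

Lemma block q o : o < size (phi t (u q)) -> u (P q + o) = nth 0 (phi t (u q)) o.
Proof. move=> Ho.
have Hq := W_size q.
have E : W q = mkseq u q ++ u q :: drop q.+1 (W q).
  rewrite -{1}(cat_take_drop q (W q)) (drop_nth 0) // -(ubeta_W Hq).
  congr (_ ++ _).
  apply: (@eq_from_nth _ 0); first by rewrite size_take Hq size_mkseq.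
  move=> i; rewrite size_take Hq => Hi. rewrite nth_take // nth_mkseq //.
  by rewrite (ubeta_W (n:=q)) //; lia.
have E2 : W q.+1 = phiw t (mkseq u q) ++ phi t (u q) ++ phiw t (drop q.+1 (W q)).
  by rewrite /W iterS -/(W q) {1}E phiw_cat phiw_cons.
rewrite (ubeta_W (n:=q.+1)); last by rewrite E2 !size_cat -/(P q); lia.
by rewrite E2 nth_cat -/(P q) ltnNge leq_addr /= addKn nth_cat Ho.
Qed.

Lemma P_ge q : q <= P q.
Proof. elim: q => // q IH. rewrite PS. have := size_phi (u q). lia. Qed.

Lemma cover r : exists q, P q <= r < P q.+1.
Proof. elim: r => [|r [q /andP [H1 H2]]].
  exists 0; rewrite P0 PS P0 /=. exact: size_phi.
case: (ltnP r.+1 (P q.+1)) => H3; first by exists q; rewrite H3 andbT; lia.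
exists q.+1. rewrite (PS q.+1). have := size_phi (u q.+1). lia. Qed.

Lemma letter_pos r : u r != 0 -> exists q, [/\ u q = (u r).-1,
   r = P q + tdig t (u r) & forall j, j < tdig t (u r) -> u (P q + j) = 0].
Proof. move=> Hr. case: (cover r) => q /andP [H1 H2].
have Ho : r - P q < size (phi t (u q)) by move: H2; rewrite PS; lia.
have Hb := block Ho. rewrite subnKC // in Hb.
move: Hb Ho. rewrite /phi. case: ifP => Hlt.
  rewrite nth_cat size_nseq size_cat size_nseq /= nth_nseq.
  case: ifP => Hi.
    move=> Hb; by move: Hr; rewrite Hb if_same.
  move=> Hb Ho. have Ei : r - P q = tdig t (u q).+1 by lia.
  rewrite Ei subnn /= in Hb. exists q. rewrite Hb /=. split => //.
    lia.
  move=> j Hj. have Hj' : j < size (phi t (u q)) by rewrite /phi Hlt size_cat size_nseq /=; lia.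
  rewrite (block Hj') /phi Hlt nth_cat size_nseq Hj nth_nseq Hj //.
rewrite nth_nseq; case: ifP => _ Hb; by move: Hr; rewrite Hb.
Qed.

Lemma prev_block q : 0 < q ->
  u (P q - 1) = if (u q.-1).+1 < size t then (u q.-1).+1 else 0.
Proof. case: q => // q _ /=. rewrite PS.
have Hs := size_phi (u q).
have Ho : (size (phi t (u q))).-1 < size (phi t (u q)) by lia.
have -> : P q + size (phi t (u q)) - 1 = P q + (size (phi t (u q))).-1 by lia.
rewrite (block Ho) /phi. case: ifP => Hlt.
  by rewrite size_cat size_nseq /= addn1 /= nth_cat size_nseq ltnn subnn.
by rewrite nth_nseq; case: ifP.
Qed.

Lemma L1 k : 0 < k -> forall r, 0 < r -> u r = k -> k < u (r - 1) -> False.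
Proof. elim: k => // k IH _ r Hr Ek Hlt.
have Hn : u r != 0 by rewrite Ek.
case: (letter_pos Hn) => q [Hq Er Hz]. rewrite Ek /= in Hq Er Hz.
case: (posnP (tdig t k.+1)) => HT.
  rewrite HT addn0 in Er.
  have Hq0 : 0 < q. case: q Hq Er Hz => //; rewrite P0 => _ E; by rewrite E in Hr.
  have Hpb := prev_block Hq0. rewrite -Er in Hpb. rewrite Hpb in Hlt.
  move: Hlt; case: ifP => // _ Hlt.
  case: k IH Hq HT Hlt Ek Hn Hz Er => [|k] IH Hq HT Hlt Ek Hn Hz Er; first by move: Ht1; rewrite HT.
  apply: (IH _ q) => //. by rewrite subn1.
have := Hz (tdig t k.+1).-1. have -> : P q + (tdig t k.+1).-1 = r - 1 by lia.
move=> H. rewrite H in Hlt; lia.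
Qed.

Lemma fnth s i j : s = [seq u (i + j) | j <- iota 0 (size s)] -> j < size s -> nth 0 s j = u (i + j).
Proof. move=> E Hj. by rewrite {1}E (nth_map 0) ?size_iota // nth_iota. Qed.

Lemma ext1 w a : factor t (a :: rcons w 1) -> size w < tdig t 1 -> a = 0.
Proof. case=> i E Hn.
have Hs : size (a :: rcons w 1) = (size w).+2 by rewrite /= size_rcons.
have H1 := fnth E. rewrite Hs in H1.
have Ha : a = u (i + 0) by rewrite -H1.
have Hone : u (i + (size w).+1) = 1 by rewrite -H1 //= nth_rcons ltnn eqxx.
have Hn0 : u (i + (size w).+1) != 0 by rewrite Hone.
case: (letter_pos Hn0) => q [_ Er Hz]. rewrite Hone in Er Hz.
rewrite Ha addn0. have -> : i = P q + (tdig t 1 - (size w).+1) by lia.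
apply: Hz. lia.
Qed.

Lemma main_sec (Hp : parry_cond t) w Y Z :
    trident_with t w 1 Y Z -> Y <> 0 -> tdig t Y = tdig t 1.
Proof.
move=> [[HX HYm HZm] [HLS [[HfY HnLSY] _]]] HY0.
have HY1 : Y <> 1 by move=> E; apply: HnLSY; rewrite E.
have HY2 : 2 <= Y by lia.
have Hle : tdig t Y <= tdig t 1.
  have : 2 <= Y <= size t by apply/andP; split => //; lia.
  move/Hp => [n [Hk Hn]]. rewrite /tdig /=.
  case: n Hk Hn => [|n] Hk Hn; first by rewrite addn0 in Hn; lia.
  by rewrite -(Hk 0) // addn0.
case: (ltngtP (tdig t Y) (tdig t 1)) => // Hlt; last by lia.
exfalso.
case: HLS => a [b [Hab [Ha Hb]]].
case: (leqP (size w) (tdig t Y)) => Hn.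
  apply: Hab. rewrite (ext1 Ha) ?(ext1 Hb) //; lia.
case: HfY => i EY. case: Ha => i' E1.
have HsY : size (rcons w Y) = (size w).+1 by rewrite size_rcons.
have HYY := fnth EY. rewrite HsY in HYY.
have Hs1 : size (a :: rcons w 1) = (size w).+2 by rewrite /= size_rcons.
have H11 := fnth E1. rewrite Hs1 in H11.
have EuY : u (i + size w) = Y by rewrite -HYY // nth_rcons ltnn eqxx.
have Euo : u (i' + (size w).+1) = 1 by rewrite -H11 //= nth_rcons ltnn eqxx.
have Hn0 : u (i' + (size w).+1) != 0 by rewrite Euo.
case: (letter_pos Hn0) => q' [_ Er' Hz']. rewrite Euo in Er' Hz'.
have HYn0 : u (i + size w) != 0 by rewrite EuY; apply/eqP.
case: (letter_pos HYn0) => q [Hq Er _]. rewrite EuY in Hq Er.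
set j0 := size w - tdig t Y - 1.
have Hj : j0 < size w by rewrite /j0; lia.
have Hj0 : u (i + j0) = 0.
  have -> : u (i + j0) = u (i' + j0.+1).
    rewrite -HYY; last by lia.
    rewrite -H11; last by lia.
    by rewrite /= !nth_rcons Hj.
  have -> : i' + j0.+1 = P q' + (tdig t 1 - tdig t Y - 1) by rewrite /j0; lia.
  apply: Hz'. lia.
have Hq0 : 0 < q.
  case: q Hq Er {Hj0} => // _; rewrite P0 add0n => E. lia.
have Hpb := prev_block Hq0.
have Epq : P q - 1 = i + j0 by rewrite /j0; lia.
rewrite Epq in Hpb.
rewrite Hj0 in Hpb. move: Hpb; case: ifP => // Hge _.
apply: (@L1 Y.-1 _ q) => //; first by lia.
rewrite subn1. lia.
Qed.
End S.

Theorem mainTheorem10 (t : seq nat) :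
  2 <= size t ->
  1 <= tdig t 1 ->
  parry_cond t ->
  tdig t (size t) = 1 ->
  forall (w : seq nat) (Y Z : nat),
    trident_with t w 1 Y Z ->
    Y <> 0 ->
    tdig t Y = tdig t 1.
Proof. move=> H1 H2 H3 H4 w Y Z HT HY. exact: (main_sec H1 H2 H4 H3 HT HY). Qed.
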